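(* Let $B$ be a finite brace. Then $B$ is a one-generator brace (i.e. $B=B(x)$ for some $x\in B$) if and only if $B$ has a transitive cycle base $X$ such that $X$ is a one-generator cycle set.
   Context: A brace is a triple $(B,+,\circ)$ with $(B,+)$ an abelian group, $(B,\circ)$ a group, and $a\circ(b+c)=a\circ b-a+a\circ c$; $\lambda_a(b):=-a+a\circ b$, $a^-$ is the inverse of $a$ in $(B,\circ)$. $B$ is a cycle set via $a\cdot b:=\lambda_{a^-}(b)$. $B(x)$ is the smallest subset of $B$ containing $x$ that is a subgroup of both $(B,+)$ and $(B,\circ)$. A cycle set is a non-empty set with operation $\cdot$ such that each $y\mapsto x\cdot y$ is bijective and $(x\cdot y)\cdot(x\cdot z)=(y\cdot x)\cdot(y\cdot z)$; a sub-cycle set is a subset that is a cycle set under the restricted operation; $\langle x\rangle$ is the smallest sub-cycle set containing $x$, and a cycle set $X$ is one-generator if $X=\langle x\rangle$ for some $x\in X$. A transitive cycle base of $B$ is a subset that is a single orbit of the group generated by $\{\lambda_a:a\in B\}$ and generates $(B,+)$; it is a sub-cycle set of $B$ with the induced operation. *)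

(* Defs.v *)
From HB Require Import structures.
From mathcomp Require Import all_boot all_order all_algebra all_fingroup.
Set Implicit Arguments. Unset Strict Implicit. Unset Printing Implicit Defensive.
Import GRing.Theory.
Local Open Scope ring_scope.

Record brace_on (T : finZmodType) : Type := Brace {
  circ : T -> T -> T;
  cinv : T -> T;
  cone : T;
  circA : forall a b c, circ a (circ b c) = circ (circ a b) c;
  circ1l : forall a, circ cone a = a;
  circ1r : forall a, circ a cone = a;
  circVl : forall a, circ (cinv a) a = cone;
  circVr : forall a, circ a (cinv a) = cone;
  brace_ax : forall a b c, circ a (b + c) = circ a b - a + circ a c
}.

Section Brace.
Variables (T : finZmodType) (B : brace_on T).

Definition lam (a b : T) : T := - a + circ B a b.

Lemma lam_inj a : injective (lam a).
Proof.
move=> b c; rewrite /lam => /addrI H.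
by rewrite -(circ1l B b) -(circ1l B c) -(circVl B a) -!circA H.
Qed.

Definition lam_perm (a : T) : {perm T} := perm (@lam_inj a).

Definition lam_group : {set {perm T}} := <<[set lam_perm a | a in T]>>%g.

Definition cdot (a b : T) : T := lam (cinv B a) b.

Definition add_subgroup (S : {set T}) : Prop :=
  [/\ 0 \in S, (forall a b, a \in S -> b \in S -> a + b \in S)
    & (forall a, a \in S -> - a \in S)].
Definition circ_subgroup (S : {set T}) : Prop :=
  [/\ cone B \in S, (forall a b, a \in S -> b \in S -> circ B a b \in S)
    & (forall a, a \in S -> cinv B a \in S)].

(* y \in B(x), where B(x) is the smallest subset containing x that is a
   subgroup of both (B,+) and (B,o) (i.e. the intersection of all such) *)
Definition in_Bgen (x y : T) : Prop :=
  forall S : {set T}, add_subgroup S -> circ_subgroup S -> x \in S -> y \in S.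

Definition one_generator_brace : Prop := exists x : T, forall y : T, in_Bgen x y.

Definition generates_add (X : {set T}) : Prop :=
  forall y : T, forall S : {set T}, add_subgroup S -> X \subset S -> y \in S.

Definition transitive_cycle_base (X : {set T}) : Prop :=
  (exists x : T, X = orbit 'P lam_group x) /\ generates_add X.

Definition sub_cycle_set (Y : {set T}) : Prop :=
  [/\ Y != set0,
      (forall x y, x \in Y -> y \in Y -> cdot x y \in Y),
      (forall x z, x \in Y -> z \in Y -> exists! y, y \in Y /\ cdot x y = z)
    & (forall x y z, x \in Y -> y \in Y -> z \in Y ->
        cdot (cdot x y) (cdot x z) = cdot (cdot y x) (cdot y z))].

Definition in_cgen (X : {set T}) (x y : T) : Prop :=
  forall Y : {set T}, sub_cycle_set Y -> Y \subset X -> x \in Y -> y \in Y.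

Definition one_generator_cycle_set (X : {set T}) : Prop :=
  sub_cycle_set X /\ exists2 x, x \in X & forall y, y \in X <-> in_cgen X x y.

End Brace.

(* Main.v *)
Require Import Defs.
From mathcomp Require Import all_boot all_order all_algebra all_fingroup.
Set Implicit Arguments. Unset Strict Implicit. Unset Printing Implicit Defensive.
Import GRing.Theory.
Local Open Scope ring_scope.

Lemma circ0r (T : finZmodType) (B : brace_on T) a : circ B a 0 = a.
Proof.
have := brace_ax B a 0 0; rewrite addr0 => H.
apply/eqP; rewrite -subr_eq0; apply/eqP; apply: (addIr (circ B a 0)).
by rewrite add0r -H.
Qed.

Lemma cone0 (T : finZmodType) (B : brace_on T) : cone B = 0.
Proof. by have := circ0r B (cone B); rewrite circ1l => ->. Qed.

Lemma lam1 (T : finZmodType) (B : brace_on T) b : lam B (cone B) b = b.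
Proof. by rewrite /lam circ1l cone0 oppr0 add0r. Qed.

Lemma lamD (T : finZmodType) (B : brace_on T) a b c :
  lam B a (b + c) = lam B a b + lam B a c.
Proof. by rewrite /lam brace_ax !addrA. Qed.

Lemma lam0 (T : finZmodType) (B : brace_on T) a : lam B a 0 = 0.
Proof. by rewrite /lam circ0r addNr. Qed.

Lemma lamN (T : finZmodType) (B : brace_on T) a b : lam B a (- b) = - lam B a b.
Proof. by apply/eqP; rewrite -addr_eq0 -lamD addNr lam0. Qed.

Lemma circE (T : finZmodType) (B : brace_on T) a b : circ B a b = a + lam B a b.
Proof. by rewrite /lam addrA addrN add0r. Qed.

Lemma circ_lam (T : finZmodType) (B : brace_on T) a b c :
  lam B (circ B a b) c = lam B a (lam B b c).
Proof.
rewrite [lam B b c]/lam lamD lamN /lam circA opprD opprK addrACA addrN add0r.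
by [].
Qed.

Lemma circK (T : finZmodType) (B : brace_on T) a b c :
  circ B a b = circ B a c -> b = c.
Proof.
by move=> H; rewrite -(circ1l B b) -(circVl B a) -circA H circA circVl circ1l.
Qed.

Lemma cinvM (T : finZmodType) (B : brace_on T) a b :
  cinv B (circ B a b) = circ B (cinv B b) (cinv B a).
Proof.
apply: (@circK _ B (circ B a b)).
by rewrite circVr -circA (circA B b) circVr circ1l circVr.
Qed.

Lemma cycle_id (T : finZmodType) (B : brace_on T) x y z :
  cdot B (cdot B x y) (cdot B x z) = cdot B (cdot B y x) (cdot B y z).
Proof.
have key : forall x y, circ B x (lam B (cinv B x) y) = x + y.
  by move=> u v; rewrite circE -circ_lam circVr lam1.
by rewrite /cdot -!circ_lam -!cinvM !key addrC.
Qed.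

Lemma lam_permE (T : finZmodType) (B : brace_on T) a b : lam_perm B a b = lam B a b.
Proof. by rewrite permE. Qed.

Lemma lam_permM (T : finZmodType) (B : brace_on T) a b :
  lam_perm B (circ B a b) = (lam_perm B b * lam_perm B a)%g.
Proof. by apply/permP => c; rewrite permM !permE circ_lam. Qed.

Lemma lam_perm1 (T : finZmodType) (B : brace_on T) : lam_perm B (cone B) = 1%g.
Proof. by apply/permP => c; rewrite perm1 permE lam1. Qed.

Lemma lam_permV (T : finZmodType) (B : brace_on T) a :
  lam_perm B (cinv B a) = ((lam_perm B a)^-1)%g.
Proof.
by apply/eqP; rewrite eq_sym eq_invg_mul -lam_permM circVl lam_perm1.
Qed.

Lemma mem_lam_group (T : finZmodType) (B : brace_on T) a :
  lam_perm B a \in lam_group B.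
Proof. by apply/mem_gen/imsetP; exists a. Qed.

Lemma lam_group_add (T : finZmodType) (B : brace_on T) g :
  g \in lam_group B -> forall a b, g (a + b) = g a + g b.
Proof.
set A := [set p : {perm T} | [forall a, forall b, p (a + b) == p a + p b]].
have gA : group_set A.
  apply/group_setP; split.
    by rewrite inE; apply/forallP => a; apply/forallP => b; rewrite !perm1.
  move=> p q; rewrite !inE => /forallP Hp /forallP Hq.
  apply/forallP => a; apply/forallP => b.
  by rewrite !permM (eqP (forallP (Hp a) b)) (eqP (forallP (Hq _) _)).
have sub : lam_group B \subset Group gA.
  rewrite gen_subG; apply/subsetP => p /imsetP[a _ ->]; rewrite inE.
  by apply/forallP => u; apply/forallP => v; rewrite !permE lamD.
move=> Hg; move/subsetP: sub => /(_ g Hg); rewrite inE => /forallP H a b.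
exact/eqP/(forallP (H a)).
Qed.

Lemma inj_onto (T : finType) (Y : {set T}) (f : T -> T) :
  injective f -> (forall y, y \in Y -> f y \in Y) ->
  forall z, z \in Y -> exists2 y, y \in Y & f y = z.
Proof.
move=> inj HY z zY.
have sub : f @: Y \subset Y by apply/subsetP => w /imsetP[y yY ->]; exact: HY.
have eq : f @: Y = Y by apply/eqP; rewrite eqEcard sub (card_imset _ inj) leqnn.
have : z \in f @: Y by rewrite eq.
by case/imsetP => y yY ->; exists y.
Qed.

Lemma sub_cycle_of (T : finZmodType) (B : brace_on T) (Y : {set T}) :
  Y != set0 -> (forall x y, x \in Y -> y \in Y -> cdot B x y \in Y) ->
  sub_cycle_set B Y.
Proof.
move=> ne cl; split => //.
  move=> x z xY zY.
  have [y yY e] := inj_onto (@lam_inj T B (cinv B x)) (fun y yY => cl x y xY yY) zY.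
  exists y; split; first by split.
  move=> y' [_ e']; apply: (@lam_inj T B (cinv B x)).
  by rewrite /cdot in e'; rewrite e e'.
by move=> x y z _ _ _; apply: cycle_id.
Qed.

Lemma orbit_inv (T : finType) (G : {group {perm T}}) x z g :
  z \in orbit 'P G x -> g \in G -> g z \in orbit 'P G x.
Proof.
case/orbitP => h hG <- gG; apply/orbitP; exists (h * g)%g; first exact: groupM.
by rewrite /= !apermE permM.
Qed.

Definition inv_set (T : finType) (G : {set {perm T}}) (H : {set T}) :=
  [set t | [forall g in G, g t \in H]].

Lemma inv_set_closed (T : finType) (G : {group {perm T}}) H t p :
  t \in inv_set G H -> p \in G -> p t \in inv_set G H.
Proof.
rewrite !inE => /forall_inP Ht pG; apply/forall_inP => g gG.
by rewrite -permM; apply: Ht; exact: groupM.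
Qed.

Lemma inv_set_sub (T : finType) (G : {group {perm T}}) H t :
  t \in inv_set G H -> t \in H.
Proof. by rewrite inE => /forall_inP /(_ 1%g (group1 G)); rewrite perm1. Qed.

Lemma inv_add (T : finZmodType) (B : brace_on T) (G : {group {perm T}}) H :
  G \subset lam_group B -> add_subgroup H -> add_subgroup (inv_set G H).
Proof.
move=> /subsetP sG [H0 HD HN].
have gD : forall g, g \in G -> forall a b, g (a + b) = g a + g b.
  by move=> g gG; apply: lam_group_add; exact: sG.
have g0 : forall g, g \in G -> g 0 = 0.
  move=> g gG; have := gD g gG 0 0; rewrite addr0 => e.
  by apply: (addrI (g 0)); rewrite addr0 -e.
have gN : forall g, g \in G -> forall a, g (- a) = - g a.
  move=> g gG a; apply/eqP; rewrite -addr_eq0 -gD // addNr g0 //.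
split.
- by rewrite inE; apply/forall_inP => g gG; rewrite g0.
- move=> a b; rewrite !inE => /forall_inP Ha /forall_inP Hb.
  by apply/forall_inP => g gG; rewrite gD //; apply: HD; [apply: Ha | apply: Hb].
- move=> a; rewrite !inE => /forall_inP Ha.
  by apply/forall_inP => g gG; rewrite gN //; apply: HN; apply: Ha.
Qed.

Lemma circ_sub (T : finZmodType) (B : brace_on T) (S : {set T}) :
  add_subgroup S ->
  (forall a t, a \in S -> t \in S -> lam B a t \in S) ->
  (forall a t, a \in S -> t \in S -> lam B (cinv B a) t \in S) ->
  circ_subgroup B S.
Proof.
move=> [S0 SD SN] HL HV; split.
- by rewrite cone0.
- by move=> a b aS bS; rewrite circE; apply: SD => //; apply: HL.
- move=> a aS.
  have -> : cinv B a = - lam B (cinv B a) a by rewrite /lam circVl cone0 addr0 opprK.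
  by apply: SN; apply: HV.
Qed.

Theorem mainTheorem8 (T : finZmodType) (B : brace_on T) :
  one_generator_brace B <->
  exists X : {set T}, transitive_cycle_base B X /\ one_generator_cycle_set B X.
Proof.
split.
- case=> x0 Hgen.
  set X := orbit 'P (lam_group B) x0.
  have Xinv : forall a z, z \in X -> lam B a z \in X.
    by move=> a z zX; rewrite -lam_permE; apply: orbit_inv zX (mem_lam_group B a).
  have x0X : x0 \in X by apply: orbit_refl.
  have subX : sub_cycle_set B X.
    apply: sub_cycle_of; first by apply/set0Pn; exists x0.
    by move=> a b _ bX; apply: Xinv.
  exists X; split; [split; first by exists x0|].
    move=> y S Sadd XS.
    have S2add := inv_add (subxx (lam_group B)) Sadd.
    have S2circ : circ_subgroup B (inv_set (lam_group B) S).
      apply: circ_sub => // a t _ tS; rewrite -lam_permE;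
        by apply: inv_set_closed tS (mem_lam_group B _).
    apply: (@inv_set_sub _ (lam_group B)); apply: Hgen => //.
    rewrite inE; apply/forall_inP => g gG; apply: (subsetP XS).
    by have := mem_orbit 'P x0 gG; rewrite ?apermE.
  split => //; exists x0 => // y; split; last by apply; rewrite ?subxx.
  move=> yX Y [_ Ycl Yex _] YX x0Y.
  set GY := <<[set lam_perm B a | a in Y]>>%g.
  have GYsub : GY \subset lam_group B.
    by apply: genS; apply/subsetP => p /imsetP[a _ ->]; apply/imsetP; exists a.
  have lamYY : forall a z, a \in Y -> z \in Y -> lam B a z \in Y.
    move=> a z aY zY; have [w [[wY e] _]] := Yex a z aY zY.
    by rewrite -e /cdot -circ_lam circVr lam1.
  have Ystab : forall g, g \in GY -> forall z, z \in Y -> g z \in Y.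
    set St := [set p : {perm T} | [forall z in Y, p z \in Y]].
    have gS : group_set St.
      apply/group_setP; split.
        by rewrite inE; apply/forall_inP => z zY; rewrite perm1.
      move=> p q; rewrite !inE => /forall_inP Hp /forall_inP Hq.
      by apply/forall_inP => z zY; rewrite permM; apply: Hq; apply: Hp.
    have sub : GY \subset Group gS.
      rewrite gen_subG; apply/subsetP => p /imsetP[a aY ->]; rewrite inE.
      by apply/forall_inP => z zY; rewrite lam_permE; apply: lamYY.
    move=> g gG z zY; move/subsetP: sub => /(_ g gG); rewrite inE.
    by move/forall_inP; apply.
  have lamY : forall a, a \in Y -> lam_perm B a \in GY.
    by move=> a aY; apply/mem_gen/imsetP; exists a.
  set C := [set b | lam_perm B b \in GY].
  have C0 : 0 \in C by rewrite inE -(cone0 B) lam_perm1 group1.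
  have CinvG : forall b, b \in C -> lam_perm B (cinv B b) \in GY.
    by move=> b; rewrite inE lam_permV groupV.
  have CY : forall c z, c \in C -> z \in Y -> c + z \in C.
    move=> c z cC zY.
    have e : c + z = circ B c (lam B (cinv B c) z)
      by rewrite circE -circ_lam circVr lam1.
    rewrite inE e lam_permM groupM //; last by move: cC; rewrite inE.
    by apply: lamY; rewrite -lam_permE; apply: Ystab => //; apply: CinvG.
  set H := [set t | [forall c in C, c + t \in C]].
  have Hadd : add_subgroup H.
    split.
    - by rewrite inE; apply/forall_inP => c cC; rewrite addr0.
    - move=> a b; rewrite !inE => /forall_inP Ha /forall_inP Hb.
      by apply/forall_inP => c cC; rewrite addrA; apply: Hb; apply: Ha.
    - move=> a; rewrite !inE => /forall_inP Ha; apply/forall_inP => c cC.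
      have [c' c'C e] := inj_onto (addIr a) Ha cC.
      by rewrite -e addrK.
  have YH : forall z, z \in Y -> z \in H.
    by move=> z zY; rewrite inE; apply/forall_inP => c cC; apply: CY.
  have HC : forall t, t \in H -> t \in C.
    by move=> t; rewrite inE => /forall_inP /(_ 0 C0); rewrite add0r.
  have Sadd := inv_add GYsub Hadd.
  have SC : forall s, s \in inv_set GY H -> s \in C.
    by move=> s sS; apply: HC; apply: (@inv_set_sub _ GY).
  have Scirc : circ_subgroup B (inv_set GY H).
    apply: circ_sub => // a t aS tS; rewrite -lam_permE;
      apply: inv_set_closed tS _.
      by move: (SC a aS); rewrite inE.
    by apply: CinvG; apply: SC.
  have x0S : x0 \in inv_set GY H.
    by rewrite inE; apply/forall_inP => g gG; apply: YH; apply: Ystab.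
  have allC : forall b, lam_perm B b \in GY.
    by move=> b; move: (SC b (Hgen b _ Sadd Scirc x0S)); rewrite inE.
  have LG : lam_group B \subset GY.
    by rewrite gen_subG; apply/subsetP => p /imsetP[b _ ->].
  case/orbitP: yX => g gG <-; rewrite ?apermE.
  by apply: Ystab => //; apply: (subsetP LG).
- case=> X [[[x1 eX] Xgen] [Xsub [x xX Hx]]].
  exists x => y S Sadd Scirc xS.
  apply: (Xgen y S Sadd); apply/subsetP => z zX.
  have : z \in X :&: S.
    apply: ((Hx z).1 zX); last by rewrite inE xX xS.
      apply: sub_cycle_of; first by apply/set0Pn; exists x; rewrite inE xX xS.
      move=> a b; rewrite !inE => /andP[aX aS] /andP[bX bS]; apply/andP; split.
        by rewrite eX /cdot -lam_permE; apply: orbit_inv (mem_lam_group B _);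
          rewrite -eX.
      case: Sadd => _ SD SN; case: Scirc => _ SC SV.
      by rewrite /cdot /lam; apply: SD; [apply: SN; apply: SV | apply: SC => //; apply: SV].
    exact: subsetIl.
  by rewrite inE => /andP[].
Qed.
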